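(* Let $\mathcal{C}$ be a systematic $[n,k,d]$ linear code over $\mathbb{F}_q$ which is an $(r,\delta)_i$ code, with $r\mid k$, $d<r+2\delta-1$, and $$d = n-k+1-\left(\left\lceil \tfrac{k}{r}\right\rceil-1\right)(\delta-1).$$ Then the generalized Hamming weights of the dual code satisfy $d^\perp_i = r+i$ for $1\le i\le \delta-1$.
   Context: For a linear code $\mathcal{D}$, its $j$-th generalized Hamming weight is the minimum size of the support $\bigcup_{\mathbf{c}\in\mathcal{E}}\{l: c_l\ne 0\}$ over all $j$-dimensional subcodes $\mathcal{E}$ of $\mathcal{D}$; $d^\perp_j$ denotes that of the dual code $\mathcal{C}^\perp$. Coordinate $i$ has locality $(r,\delta)$ if there is $S_i\ni i$ with $|S_i|\le r+\delta-1$ such that the punctured code $\mathcal{C}|_{S_i}$ has minimum distance at least $\delta$. An $(r,\delta)_i$ code is a systematic linear code (information symbols in the first $k$ coordinates) in which all $k$ information coordinates have locality $(r,\delta)$. *)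

(* Defs.v *)
(* linear codes as row spaces (mxalgebra) over a finite field. *)
From HB Require Import structures.
From mathcomp Require Import all_boot all_order all_algebra all_field.
Set Implicit Arguments. Unset Strict Implicit. Unset Printing Implicit Defensive.
Import GRing.Theory.
Local Open Scope ring_scope.

Section Codes.
Variables (F : finFieldType) (n : nat).

Definition wt_on (S : {set 'I_n}) (c : 'rV[F]_n) : nat :=
  #|[set l in S | c 0 l != 0]|.

Definition wt (c : 'rV[F]_n) : nat := wt_on setT c.

Definition in_code (C : 'M[F]_n) (c : 'rV[F]_n) : bool := (c <= C)%MS.

Definition dual (C : 'M[F]_n) : 'M[F]_n := kermx C^T.

Definition supp (E : 'M[F]_n) : {set 'I_n} :=
  [set l | [exists c : 'rV[F]_n, (c <= E)%MS && (c 0 l != 0)]].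

Definition is_ghw (D : 'M[F]_n) (j w : nat) : Prop :=
  (exists2 E : 'M[F]_n, (E <= D)%MS /\ \rank E = j & #|supp E| = w) /\
  (forall E : 'M[F]_n, (E <= D)%MS -> \rank E = j -> (w <= #|supp E|)%N).

Definition min_dist (C : 'M[F]_n) (d : nat) : Prop :=
  (exists2 c : 'rV[F]_n, in_code C c /\ c != 0 & wt c = d) /\
  (forall c : 'rV[F]_n, in_code C c -> c != 0 -> (d <= wt c)%N).

(* systematic code of dimension k: information symbols in the first k
   coordinates, i.e. the projection of C onto the first k coordinates is
   a bijection onto F^k (dim C = k and the projection is injective). *)
Definition systematic (C : 'M[F]_n) (k : nat) : Prop :=
  \rank C = k /\
  (forall c : 'rV[F]_n, in_code C c ->
     (forall l : 'I_n, (l < k)%N -> c 0 l = 0) -> c = 0).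

(* coordinate i has locality (r, delta): there is S containing i with
   |S| <= r + delta - 1 such that the punctured code C|_S has minimum
   distance >= delta (every nonzero codeword of C|_S has weight >= delta) *)
Definition has_locality (C : 'M[F]_n) (r delta : nat) (i : 'I_n) : Prop :=
  exists S : {set 'I_n},
    [/\ i \in S, (#|S| <= r + delta - 1)%N &
        forall c : 'rV[F]_n, in_code C c -> wt_on S c != 0%N ->
          (delta <= wt_on S c)%N].

Definition rdelta_i_code (C : 'M[F]_n) (k r delta : nat) : Prop :=
  systematic C k /\
  (forall i : 'I_n, (i < k)%N -> has_locality C r delta i).

End Codes.

Definition ceil_div (a b : nat) : nat := (a + b.-1) %/ b.

(* Main.v *)
Require Import Defs.
From mathcomp Require Import all_boot all_order all_algebra all_field zify.
Set Implicit Arguments. Unset Strict Implicit. Unset Printing Implicit Defensive.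
Import GRing.Theory.
Local Open Scope ring_scope.

Definition Pm (F : finFieldType) (n : nat) (S : {set 'I_n}) : 'M[F]_n :=
  diag_mx (\row_l ((l \in S)%:R)).

Lemma PmE (F : finFieldType) n (S : {set 'I_n}) a l :
  Pm F S a l = ((a == l) && (l \in S))%:R.
Proof.
rewrite /Pm !mxE; case: eqP => [->|_]; first by rewrite mulr1n.
by rewrite mulr0n.
Qed.

Lemma mulPm (F : finFieldType) m n (A : 'M[F]_(m, n)) (S : {set 'I_n}) a l :
  (A *m Pm F S) a l = if l \in S then A a l else 0.
Proof. by rewrite mul_mx_diag !mxE; case: (l \in S); rewrite ?mulr1 ?mulr0. Qed.

Lemma PmK (F : finFieldType) n (S T : {set 'I_n}) :
  S \subset T -> Pm F T *m Pm F S = Pm F S.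
Proof.
move=> ST; apply/matrixP => a l; rewrite mulPm !PmE.
case lS: (l \in S); last by rewrite andbF.
by rewrite (subsetP ST _ lS) !andbT.
Qed.

Lemma PmKr (F : finFieldType) n (S T : {set 'I_n}) :
  S \subset T -> Pm F S *m Pm F T = Pm F S.
Proof.
move=> ST; apply/matrixP => a l; rewrite mulPm !PmE.
case lT: (l \in T); first by [].
case lS: (l \in S); last by rewrite andbF.
by rewrite (subsetP ST _ lS) in lT.
Qed.

Lemma rowPmE (F : finFieldType) n (S : {set 'I_n}) a l :
  row a (Pm F S) 0 l = ((a == l) && (l \in S))%:R.
Proof. by rewrite mxE PmE. Qed.

Lemma Pm_tr (F : finFieldType) n (S : {set 'I_n}) : (Pm F S)^T = Pm F S.
Proof. exact: tr_diag_mx. Qed.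

Lemma vanish_PmK (F : finFieldType) m n (A : 'M[F]_(m, n)) (S : {set 'I_n}) :
  (forall a l, l \notin S -> A a l = 0) -> A *m Pm F S = A.
Proof.
move=> H; apply/matrixP => a l; rewrite mulPm; case: ifP => // lS.
by rewrite H // lS.
Qed.

Lemma sub_Pm_vanish (F : finFieldType) m n (A : 'M[F]_(m, n)) (S : {set 'I_n}) :
  (A <= Pm F S)%MS -> forall a l, l \notin S -> A a l = 0.
Proof.
move=> /submxP[D ->] a l lS.
by rewrite -(PmK F (subxx S)) mulmxA mulPm (negbTE lS).
Qed.

Lemma sub_PmK (F : finFieldType) m n (A : 'M[F]_(m, n)) (S : {set 'I_n}) :
  (A <= Pm F S)%MS -> A *m Pm F S = A.
Proof. by move=> H; apply: vanish_PmK; apply: sub_Pm_vanish. Qed.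

Lemma kerPm (F : finFieldType) m n (A : 'M[F]_(m, n)) (S : {set 'I_n}) :
  (A <= kermx (Pm F S))%MS <-> (forall a l, l \in S -> A a l = 0).
Proof.
rewrite sub_kermx; split.
  by move=> /eqP H a l lS; have := congr1 (fun M : 'M[F]_(m, n) => M a l) H; rewrite mulPm lS mxE.
move=> H; apply/eqP/matrixP => a l; rewrite mulPm mxE; case: ifP => // lS.
exact: H.
Qed.

Lemma rank_Pm (F : finFieldType) n (S : {set 'I_n}) : \rank (Pm F S) = #|S|.
Proof.
pose N : 'M[F]_(#|S|, n) := \matrix_(a, j) ((enum_val a == j)%:R).
have NP : (N :=: Pm F S)%MS.
  apply/eqmxP/andP; split; apply/row_subP => a.
    have aS : enum_val a \in S by apply: enum_valP.
    have -> : row a N = row (enum_val a) (Pm F S).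
      by apply/rowP => l; rewrite rowPmE !mxE; case: eqP => // <-; rewrite aS.
    exact: row_sub.
  case aS: (a \in S).
    have -> : row a (Pm F S) = row (enum_rank_in aS a) N.
      apply/rowP => l; rewrite rowPmE !mxE (enum_rankK_in aS aS).
      by case: eqP => // <-; rewrite aS.
    exact: row_sub.
  have -> : row a (Pm F S) = 0.
    by apply/rowP => l; rewrite rowPmE !mxE; case: eqP => // <-; rewrite aS.
  exact: sub0mx.
rewrite -NP; apply/eqP; rewrite eqn_leq rank_leq_row /=.
have NN : N *m N^T = 1%:M.
  apply/matrixP => a b; rewrite !mxE (bigD1 (enum_val a)) //= big1.
    rewrite !mxE eqxx addr0 mul1r.
    case: (eqVneq a b) => [->|ab]; first by rewrite eqxx.
    by rewrite (inj_eq enum_val_inj) eq_sym (negbTE ab).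
  move=> j ja; rewrite !mxE eq_sym (negbTE ja) mul0r //.
by rewrite -{1}(mxrank1 F #|S|) -NN mxrankM_maxl.
Qed.

Lemma subset_card (T : finType) (U : {set T}) m :
  (m <= #|U|)%N -> exists2 W : {set T}, W \subset U & #|W| = m.
Proof.
elim: m => [|m IH] lt; first by exists set0; [exact: sub0set | exact: cards0].
have [W WU cW] := IH (ltnW lt).
have : (0 < #|U :\: W|)%N by rewrite cardsD (setIidPr WU) cW; lia.
rewrite card_gt0 => /set0Pn[x]; rewrite inE => /andP[xW xU].
exists (x |: W); last by rewrite cardsU1 xW cW.
apply/subsetP => y; rewrite in_setU1 => /orP[/eqP->|] //; exact: (subsetP WU).
Qed.

Lemma singleton (F : finFieldType) n (X : 'M[F]_n) (U : {set 'I_n}) (dl : nat) :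
  (X <= Pm F U)%MS ->
  (forall x : 'rV[F]_n, (x <= X)%MS -> x != 0 -> (dl <= wt x)%N) ->
  (0 < \rank X)%N -> (\rank X + dl <= #|U| + 1)%N.
Proof.
move=> XU Hw a0; set a : nat := \rank X.
have aU : (a <= #|U|)%N by rewrite -(rank_Pm F U); apply: mxrankS.
have [W WU cW] := @subset_card _ U a.-1 (leq_trans (leq_pred a) aU).
have : (0 < \rank (X :&: kermx (Pm F W)))%N.
  have := mxrank_mul_ker X (Pm F W).
  have : (\rank (X *m Pm F W) <= #|W|)%N by rewrite -(rank_Pm F W) mxrankM_maxr.
  rewrite -/a cW -subn1; move: a0; rewrite -/a; clearbody a.
  move: (\rank (X *m _)) (\rank (X :&: _)) => u v; lia.
rewrite lt0n mxrank_eq0 => /rowV0Pn[x xY x0].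
have xX : (x <= X)%MS := submx_trans xY (capmxSl _ _).
have xW : (x <= kermx (Pm F W))%MS := submx_trans xY (capmxSr _ _).
have := Hw x xX x0.
have : (wt x <= #|U :\: W|)%N.
  apply: subset_leq_card; apply/subsetP => l; rewrite !inE => xl.
  apply/andP; split.
    apply/negP => lW; move: xl; by rewrite (proj1 (kerPm _ _) xW 0 l lW) eqxx.
  apply/negPn/negP => lU; move: xl.
  by rewrite (sub_Pm_vanish (submx_trans xX XU) 0 lU) eqxx.
rewrite cardsD (setIidPr WU) cW -subn1; clearbody a; move: a0; rewrite -/a; move: (wt x) => w; lia.
Qed.

Lemma vanish_subPm (F : finFieldType) m n (A : 'M[F]_(m, n)) (S : {set 'I_n}) :
  (forall a l, l \notin S -> A a l = 0) -> (A <= Pm F S)%MS.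
Proof. by move=> H; rewrite -(vanish_PmK H); exact: submxMl. Qed.

Lemma wt_neq0 (F : finFieldType) n (x : 'rV[F]_n) : x != 0 -> wt x != 0%N.
Proof.
move=> x0; apply/negP => /eqP /eqP; rewrite /wt /wt_on cards_eq0 => /eqP H.
move/negP: x0; apply; apply/eqP/rowP => l; rewrite mxE.
apply/eqP; apply/negPn/negP => xl.
have : l \in [set l0 in setT | x 0 l0 != 0] by rewrite !inE xl.
by rewrite H inE.
Qed.

Definition Zc (F : finFieldType) n (C : 'M[F]_n) (T : {set 'I_n}) : 'M[F]_n :=
  (C :&: kermx (Pm F T))%MS.

Lemma mainL (F : finFieldType) n (C : 'M[F]_n) k r delta d :
  (forall c : 'rV[F]_n, (c <= C)%MS -> (forall l : 'I_n, (l < k)%N -> c 0 l = 0) -> c = 0) ->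
  (forall i : 'I_n, (i < k)%N -> has_locality C r delta i) ->
  (forall c : 'rV[F]_n, in_code C c -> c != 0 -> (d <= wt c)%N) ->
  (0 < r)%N -> (0 < delta)%N ->
  forall T : {set 'I_n}, (0 < \rank (Zc C T))%N ->
  (d + #|T| + \rank (Zc C T) + (delta - 1) * ((\rank (Zc C T)).-1 %/ r) <= n + 1)%N.
Proof.
move=> Hsys Hloc Hd r0 d0.
suff H : forall m (T : {set 'I_n}), (n - #|T| < m)%N -> (0 < \rank (Zc C T))%N ->
  (d + #|T| + \rank (Zc C T) + (delta - 1) * ((\rank (Zc C T)).-1 %/ r) <= n + 1)%N.
  by move=> T; apply: (H (n - #|T|).+1).
elim=> [|m IH] T //=.
move=> Tm z0.
have ZC : (Zc C T <= C)%MS := capmxSl _ _.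
have ZT : (Zc C T <= kermx (Pm F T))%MS := capmxSr _ _.
have cardC : (#|T| + #|~: T| = n)%N by rewrite cardsC card_ord.
case: (leqP (\rank (Zc C T)) r) => zr.
  have -> : ((\rank (Zc C T)).-1 %/ r = 0)%N.
    by apply: divn_small; move: zr z0; move: (\rank _) => z; lia.
  have XU : (Zc C T <= Pm F (~: T))%MS.
    apply: vanish_subPm => a l; rewrite inE negbK => lT.
    exact: (proj1 (kerPm _ _) ZT).
  have := singleton XU _ z0 (dl := d).
  have Hw : forall x : 'rV[F]_n, (x <= Zc C T)%MS -> x != 0 -> (d <= wt x)%N.
    move=> x xZ x0; apply: Hd => //; exact: submx_trans xZ ZC.
  move=> /(_ Hw); move: cardC; move: (\rank _) (#|T|) (#|~: T|) => z t u; lia.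
have [x xZ x0] : exists2 x : 'rV[F]_n, (x <= Zc C T)%MS & x != 0.
  apply/rowV0Pn; rewrite -mxrank_eq0; move: z0; move: (\rank _) => z; lia.
have [j /andP[jk xj]] : exists j : 'I_n, (j < k)%N && (x 0 j != 0).
  case: (pickP (fun l : 'I_n => (l < k)%N && (x 0 l != 0))) => [j H|none].
    by exists j.
  exfalso; move/negP: x0; apply; apply/eqP; apply: Hsys.
    exact: submx_trans xZ ZC.
  by move=> l lk; have := none l; rewrite lk /= => /negbFE/eqP.
have [S [jS cS Sloc]] := Hloc j jk.
have jT : j \notin T.
  apply/negP => jT.
  by rewrite (proj1 (kerPm _ _) (submx_trans xZ ZT) 0 j jT) eqxx in xj.
pose U := S :\: T.
have jU : j \in U by rewrite inE jT jS.
pose X := Zc C T *m Pm F U.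
have XU : (X <= Pm F U)%MS := submxMl _ _.
have a0 : (0 < \rank X)%N.
  have xX : (x *m Pm F U <= X)%MS := submxMr _ xZ.
  apply: (leq_trans _ (mxrankS xX)); rewrite lt0n mxrank_eq0.
  apply/negP => /eqP H; have := congr1 (fun M : 'rV[F]_n => M 0 j) H.
  by rewrite mulPm jU mxE; apply/eqP.
have Hw : forall y : 'rV[F]_n, (y <= X)%MS -> y != 0 -> (delta <= wt y)%N.
  move=> y yX y0; have [w yE] := submxP yX.
  pose c := w *m Zc C T.
  have cC : (c <= C)%MS by apply: submx_trans (submxMl _ _) ZC.
  have cT : forall l, l \in T -> c 0 l = 0.
    by move=> l lT; apply: (proj1 (kerPm _ _) (submx_trans (submxMl _ _) ZT)).
  have yc : y = c *m Pm F U by rewrite yE mulmxA.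
  have e1 : wt y = wt_on U c.
    rewrite yc /wt /wt_on; apply: eq_card => l; rewrite !inE mulPm.
    have -> : (l \notin T) && (l \in S) = (l \in U) by rewrite inE.
    by case: (l \in U); rewrite ?eqxx.
  have e2 : wt_on S c = wt_on U c.
    rewrite /wt_on; apply: eq_card => l; rewrite !inE.
    case lT: (l \in T) => /=; last by []. by rewrite (cT l lT) eqxx andbF.
  have := Sloc c cC; rewrite e2 -e1; apply; exact: wt_neq0.
have sing := singleton XU Hw a0.
have cT' : #|T :|: U| = (#|T| + #|U|)%N.
  rewrite cardsU; have -> : T :&: U = set0.
    by apply/setP => l; rewrite !inE; case: (l \in T).
  by rewrite cards0 subn0.
have Hz' : (\rank (Zc C T) <= \rank X + \rank (Zc C (T :|: U)))%N.
  have := mxrank_mul_ker (Zc C T) (Pm F U).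
  have : (Zc C T :&: kermx (Pm F U) <= Zc C (T :|: U))%MS.
    rewrite sub_capmx; apply/andP; split; first exact: submx_trans (capmxSl _ _) ZC.
    apply/kerPm => a l; rewrite in_setU => /orP[lT|lU].
      exact: (proj1 (kerPm _ _) (submx_trans (capmxSl _ _) ZT)).
    exact: (proj1 (kerPm _ _) (capmxSr _ _)).
  move/mxrankS; rewrite /X; move: (\rank (Zc C T *m _)) (\rank (Zc C T :&: _)) => u v.
  move: (\rank (Zc C (T :|: U))) (\rank (Zc C T)) => u' v'; lia.
have US : (#|U| <= #|S|)%N by apply: subset_leq_card; exact: subsetDl.
have U0 : (0 < #|U|)%N by rewrite card_gt0; apply/set0Pn; exists j.
have TUn : (#|T :|: U| <= n)%N by rewrite -[X in (_ <= X)%N](card_ord n); apply: max_card.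
have IH' := IH (T :|: U).
have z'0 : (0 < \rank (Zc C (T :|: U)))%N.
  move: sing Hz' zr cS US; move: (\rank (Zc C T)) (\rank X) (\rank (Zc C (T :|: U))) => z a z'.
  move: (#|U|) (#|S|) => u s; lia.
have := IH' _ z'0.
have Hq : ((\rank (Zc C T)).-1 %/ r <= (\rank (Zc C (T :|: U))).-1 %/ r + 1)%N.
  rewrite -(divnDMl 1 _ r0) mul1n; apply: leq_div2r.
  move: sing Hz' zr cS US z'0; move: (\rank (Zc C T)) (\rank X) (\rank (Zc C (T :|: U))) => z a z'.
  move: (#|U|) (#|S|) => u s; lia.
have Hq2 := leq_mul (leqnn (delta - 1)) Hq.
rewrite mulnDr muln1 in Hq2.
have Tm' : (n - #|T :|: U| < m)%N.
  move: Tm cT' TUn U0; move: (#|T :|: U|) (#|T|) (#|U|) => a b c; lia.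
move=> /(_ Tm'); move: Hq2 sing Hz' zr cS US z'0 cT'.
move: ((delta - 1) * _)%N ((delta - 1) * _)%N => p q.
move: (\rank (Zc C T)) (\rank X) (\rank (Zc C (T :|: U))) => z a z'.
move: (#|U|) (#|S|) (#|T :|: U|) (#|T|) => u s tu t; lia.
Qed.

Lemma wt_Pm (F : finFieldType) n (c : 'rV[F]_n) (U : {set 'I_n}) :
  wt (c *m Pm F U) = wt_on U c.
Proof.
rewrite /wt /wt_on; apply: eq_card => l; rewrite !inE mulPm.
by case: (l \in U); rewrite ?eqxx.
Qed.

Theorem corollary2 (F : finFieldType) (n k d r delta : nat) (C : 'M[F]_n) :
  rdelta_i_code C k r delta ->
  min_dist C d ->
  (r %| k)%N ->
  (d < r + 2 * delta - 1)%N ->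
  (d%:Z = n%:Z - k%:Z + 1 - ((ceil_div k r)%:Z - 1) * (delta%:Z - 1))%R ->
  forall i : nat, (1 <= i <= delta - 1)%N -> is_ghw (dual C) i (r + i).
Proof.
move=> [[rkC Hsys] Hloc] [[c0 [c0C c0n] _] Hd] rk _ Hint i /andP[i1 idl].
have [j0 /andP[j0k c0j]] : exists j : 'I_n, (j < k)%N && (c0 0 j != 0).
  case: (pickP (fun l : 'I_n => (l < k)%N && (c0 0 l != 0))) => [j H|none].
    by exists j.
  exfalso; move/negP: c0n; apply; apply/eqP; apply: Hsys => //.
  by move=> l lk; have := none l; rewrite lk /= => /negbFE/eqP.
have k0 : (0 < k)%N by apply: leq_ltn_trans j0k.
have r0 : (0 < r)%N.
  rewrite lt0n; apply/negP => /eqP r0'; move: rk; rewrite r0' dvd0n => /eqP k0'.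
  by move: k0; rewrite k0'.
have d1 : (1 <= delta - 1)%N by apply: leq_trans idl.
set m := (k %/ r)%N.
have km : k = (m * r)%N by rewrite divnK.
have m0 : (0 < m)%N by move: k0; rewrite km; case: (m).
have ceilm : ceil_div k r = m.
  rewrite /ceil_div km divnMDl // divn_small ?addn0 //; move: r0; case: (r) => //= r' _.
have Heq : (d + k + (delta - 1) * (m - 1) = n + 1)%N.
  move: Hint; rewrite ceilm.
  have -> : ((m%:Z - 1) * (delta%:Z - 1) = ((delta - 1) * (m - 1))%N%:Z)%R.
    rewrite !subzn //; first by rewrite -PoszM mulnC.
    exact: leq_trans d1 (leq_subr _ _).
  move: ((delta - 1) * (m - 1))%N => p; lia.
have Hmr : ((m - 1) * r + r = k)%N by rewrite km mulnBl mul1n subnK // leq_pmull.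
have LB : forall E : 'M[F]_n, (E <= dual C)%MS -> \rank E = i -> (r + i <= #|supp E|)%N.
  move=> E ED rE; set S := supp E.
  have EPS : (E <= Pm F S)%MS.
    apply: vanish_subPm => a l lS; apply/eqP/negPn/negP => Eal.
    move/negP: lS; apply; rewrite inE; apply/existsP; exists (row a E).
    by rewrite row_sub mxE Eal.
  pose A := Pm F S *m C^T.
  have EX : (E <= Pm F S :&: kermx A)%MS.
    rewrite sub_capmx EPS /= sub_kermx /A mulmxA (sub_PmK EPS).
    by move: ED; rewrite /dual sub_kermx.
  have rX := mxrank_mul_ker (Pm F S) A.
  have rA : \rank (Pm F S *m A) = \rank (C *m Pm F S).
    rewrite /A mulmxA (PmK _ (subxx S)) -mxrank_tr trmx_mul trmxK Pm_tr //.
  have rC := mxrank_mul_ker C (Pm F S).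
  have rCS : (\rank (C *m Pm F S) <= #|S|)%N by rewrite -(rank_Pm F S) mxrankM_maxr.
  have rE' := mxrankS EX.
  rewrite rank_Pm rA in rX; rewrite rE in rE'; rewrite rkC in rC.
  rewrite leqNgt; apply/negP => Slt.
  have z0 : (0 < \rank (Zc C S))%N.
    move: rX rC rCS rE' Slt; rewrite /Zc; move: (\rank (C *m _)) (\rank (C :&: _)) (\rank (Pm F S :&: _)) (#|S|) => a b c s.
    have kr : (r <= k)%N by rewrite -Hmr leq_addl.
    lia.
  have := mainL Hsys Hloc Hd r0 (leq_trans d1 (leq_subr _ _)) z0.
  have Hq : (m - 1 <= (\rank (Zc C S)).-1 %/ r)%N.
    rewrite -(mulnK (m - 1) r0); apply: leq_div2r.
    move: rX rC rCS rE' Slt Hmr; rewrite /Zc; move: (\rank (C *m _)) (\rank (C :&: _)) (\rank (Pm F S :&: _)) (#|S|) => a b c s.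
    move: ((m - 1) * r)%N => t; lia.
  have Hq2 := leq_mul (leqnn (delta - 1)) Hq.
  move: Hq2 Heq rX rC rCS rE' Slt; rewrite /Zc.
  move: ((delta - 1) * _)%N ((delta - 1) * _)%N => p q.
  move: (\rank (C *m _)) (\rank (C :&: _)) (\rank (Pm F S :&: _)) (#|S|) => a b c s.
  lia.
have [S0 [j0S cS0 Sloc]] := Hloc j0 j0k.
set rho := \rank (C *m Pm F S0).
have rho0 : (0 < rho)%N.
  have xX : (c0 *m Pm F S0 <= C *m Pm F S0)%MS := submxMr _ c0C.
  apply: (leq_trans _ (mxrankS xX)); rewrite lt0n mxrank_eq0.
  apply/negP => /eqP H; have := congr1 (fun M : 'rV[F]_n => M 0 j0) H.
  by rewrite mulPm j0S mxE; apply/eqP.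
have Hw : forall y : 'rV[F]_n, (y <= C *m Pm F S0)%MS -> y != 0 -> (delta <= wt y)%N.
  move=> y yX y0; have [w yE] := submxP yX.
  have cC : (w *m C <= C)%MS := submxMl _ _.
  have yc : y = (w *m C) *m Pm F S0 by rewrite yE mulmxA.
  have := Sloc _ cC; rewrite -wt_Pm -yc; apply; exact: wt_neq0.
have sing := singleton (submxMl _ _) Hw rho0.
have [S SS0 cS] := @subset_card _ S0 (rho + i)%N
  ltac:(rewrite -/rho in sing; move: sing idl; move: (rho) (#|S0|) => a b; lia).
pose A := Pm F S *m C^T.
pose X := (Pm F S :&: kermx A)%MS.
have rX := mxrank_mul_ker (Pm F S) A.
have rA : (\rank (Pm F S *m A) <= rho)%N.
  rewrite /A mulmxA (PmK _ (subxx S)) -mxrank_tr trmx_mul trmxK Pm_tr.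
  by rewrite -(PmK _ SS0) mulmxA mxrankM_maxl.
rewrite rank_Pm cS -/X in rX.
have iX : (i <= \rank X)%N.
  move: rX rA; move: (\rank (Pm F S *m A)) (\rank X) (rho) => a b c; lia.
have iS : (i <= n)%N.
  apply: leq_trans (leq_addl rho i) _; rewrite -cS -[X in (_ <= X)%N](card_ord n); exact: max_card.
pose E := (pid_mx i : 'M[F]_(n, \rank X)) *m row_base X.
have rE : \rank E = i by rewrite /E mxrankMfree ?row_base_free // rank_pid_mx.
have EX : (E <= X)%MS by rewrite /E; apply: submx_trans (submxMl _ _) _; rewrite eq_row_base.
have EPS : (E <= Pm F S)%MS := submx_trans EX (capmxSl _ _).
have ED : (E <= dual C)%MS.
  rewrite /dual sub_kermx -(sub_PmK EPS) -mulmxA -/A -sub_kermx.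
  exact: submx_trans EX (capmxSr _ _).
have suppS : (#|supp E| <= #|S|)%N.
  apply: subset_leq_card; apply/subsetP => l; rewrite inE => /existsP[c /andP[cE cl]].
  apply/negPn/negP => lS; move: cl.
  by rewrite (sub_Pm_vanish (submx_trans cE EPS) 0 lS) eqxx.
split.
  exists E => //; apply/eqP; rewrite eqn_leq LB // andbT.
  rewrite cS in suppS; move: suppS sing cS0 r0; rewrite -/rho; move: (#|supp E|) (rho) (#|S0|) => a b c.
  lia.
move=> E' E'D rE'; exact: LB.
Qed.
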